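(* Let $A$ be an $n\times n$ P-matrix and let $I$ be the $n\times n$ identity matrix. Then the $2n\times 2n$ matrix \[M=\begin{pmatrix} A & A+I\\ A-I & A\end{pmatrix}\] is also a P-matrix.
   Context: A P-matrix is a square real matrix all of whose principal minors are positive. *)

(* Defs.v *)
From HB Require Import structures.
From mathcomp Require Import all_boot all_order all_algebra.
Set Implicit Arguments. Unset Strict Implicit. Unset Printing Implicit Defensive.
Import Order.TTheory GRing.Theory Num.Theory.
Local Open Scope ring_scope.

Definition principal_submx (R : pzRingType) (n : nat) (A : 'M[R]_n) (S : {set 'I_n})
  : 'M[R]_#|S| :=
  \matrix_(i < #|S|, j < #|S|) A (enum_val i) (enum_val j).

Definition is_Pmatrix (R : realFieldType) (n : nat) (A : 'M[R]_n) : Prop :=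
  forall S : {set 'I_n}, S != set0 -> 0 < \det (principal_submx A S).

(* Main.v *)
Require Import Defs.
From HB Require Import structures.
From mathcomp Require Import all_boot all_order all_algebra all_fingroup.
Import Order.TTheory GRing.Theory Num.Theory.
Local Open Scope ring_scope.
From mathcomp Require Import ring lra.
Set Implicit Arguments. Unset Strict Implicit.

Section S.
Variable R : realFieldType.

Definition NR n (A : 'M[R]_n) := forall x : 'rV[R]_n, x != 0 ->
  exists i, 0 < x 0 i * (x *m A) 0 i.

Definition Pinj n (A : 'M[R]_n) := forall k (f : 'I_k -> 'I_n), injective f ->
  0 < \det (mxsub f f A).

Lemma det_add_delta n (B : 'M[R]_n) i0 c :
  \det (B + c *: delta_mx i0 i0) = \det B + c * cofactor B i0 i0.
Proof.
rewrite (expand_det_row _ i0) (expand_det_row B i0).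
have Ecof j : cofactor (B + c *: delta_mx i0 i0) i0 j = cofactor B i0 j.
  rewrite /cofactor; congr (_ * \det _); apply/matrixP => a b.
  by rewrite !mxE eq_sym (negbTE (neq_lift _ _)) mulr0 addr0.
under eq_bigr => j _ do rewrite Ecof !mxE eqxx /=.
rewrite (bigD1 i0) //= (bigD1 i0 (P := predT)) //= eqxx mulr1.
rewrite mulrDl [RHS]addrAC -!addrA; congr (_ + _); congr (_ + _).
apply: eq_bigr => j /negbTE ->.
by rewrite mulr0 addr0.
Qed.

Lemma cofactor_ii n (B : 'M[R]_n) i0 :
  cofactor B i0 i0 = \det (mxsub (lift i0) (lift i0) B).
Proof.
rewrite /cofactor addnn -signr_odd odd_double expr0 mul1r; congr (\det _).
by apply/matrixP => a b; rewrite !mxE.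
Qed.

Lemma det_mxsub_perm n (B : 'M[R]_n) (s : 'S_n) : \det (mxsub s s B) = \det B.
Proof.
have -> : mxsub s s B = perm_mx s *m B *m perm_mx s^-1.
  by rewrite -row_permE -col_permE row_permEsub col_permEsub -mxsub_comp.
rewrite !det_mulmx !det_perm odd_permV mulrC mulrA -signr_addb addbb expr0 mul1r //.
Qed.


Definition Pm k n (f : 'I_k -> 'I_n) : 'M[R]_(k, n) := \matrix_(l, i) ((f l == i)%:R).

Lemma mulPtr m k n (f : 'I_k -> 'I_n) (M : 'M[R]_(m, n)) a j :
  (M *m (Pm f)^T) a j = M a (f j).
Proof.
rewrite mxE (bigD1 (f j)) //= !mxE eqxx mulr1 big1 ?addr0 // => i /negbTE.
by rewrite !mxE eq_sym => ->; rewrite mulr0.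
Qed.

Lemma mulPl m k n (f : 'I_k -> 'I_n) (M : 'M[R]_(n, m)) l i :
  (Pm f *m M) l i = M (f l) i.
Proof.
rewrite mxE (bigD1 (f l)) //= !mxE eqxx mul1r big1 ?addr0 // => i' /negbTE.
by rewrite !mxE eq_sym => ->; rewrite mul0r.
Qed.

Lemma mxsubP k n (f : 'I_k -> 'I_n) (A : 'M[R]_n) :
  mxsub f f A = Pm f *m A *m (Pm f)^T.
Proof. by apply/matrixP => l j; rewrite mulPtr mulPl !mxE. Qed.

Lemma mulP_in k n (f : 'I_k -> 'I_n) (x : 'rV[R]_k) j : injective f ->
  (x *m Pm f) 0 (f j) = x 0 j.
Proof.
move=> finj; rewrite mxE (bigD1 j) //= !mxE eqxx mulr1 big1 ?addr0 // => i /negbTE.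
by rewrite !mxE (inj_eq finj) => ->; rewrite mulr0.
Qed.

Lemma mulP_out k n (f : 'I_k -> 'I_n) (x : 'rV[R]_k) i : (forall j, f j != i) ->
  (x *m Pm f) 0 i = 0.
Proof.
move=> H; rewrite mxE big1 // => l _; by rewrite !mxE (negbTE (H l)) mulr0.
Qed.

Lemma nz_entry n (x : 'rV[R]_n) : x != 0 -> exists i, x 0 i != 0.
Proof.
move=> x0; case: (pickP (fun j => x 0 j != 0)) => [j xj | H]; first by exists j.
case/eqP: x0; apply/matrixP => a b; rewrite ord1 mxE; apply/eqP.
by move: (H b) => /= /negbFE.
Qed.

Lemma NR_sub n (A : 'M[R]_n) k (f : 'I_k -> 'I_n) : injective f ->
  NR A -> NR (mxsub f f A).
Proof.
move=> finj HA x x0.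
have [j xj] : exists j, x 0 j != 0.
  case: (pickP (fun j => x 0 j != 0)) => [j xj | H]; first by exists j.
  case/eqP: x0; apply/matrixP => a b; rewrite ord1 mxE; apply/eqP.
  by move: (H b) => /= /negbFE.
set z := x *m Pm f.
have z0 : z != 0.
  by apply/eqP => /matrixP /(_ 0 (f j)); rewrite mulP_in // mxE => /eqP; apply/negP.
have [i Hi] := HA z z0.
have [j' Ej'] : exists j', f j' = i.
  case: (pickP (fun j' => f j' == i)) => [j' /eqP E | H]; first by exists j'.
  by move: Hi; rewrite mulP_out ?mul0r ?ltxx // => l; rewrite H.
exists j'; rewrite mxsubP !mulmxA mulPtr -/z Ej' -(mulP_in _ _ finj) Ej'.
by [].
Qed.

Lemma NR_det0 n (C : 'M[R]_n) : NR C -> \det C != 0.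
Proof.
move=> HC; apply/negP => /det0P [v v0 vC]; have [i] := HC v v0.
by rewrite vC mxE mulr0 ltxx.
Qed.

Lemma mul_delta n p (x : 'rV[R]_n) a (b : 'I_p) i :
  (x *m delta_mx a b) 0 i = if i == b then x 0 a else 0.
Proof.
rewrite mxE (bigD1 a) //= !mxE eqxx big1 ?addr0 /=.
  by case: (i == b); rewrite ?mulr1 ?mulr0.
by move=> l /negbTE; rewrite !mxE => ->; rewrite mulr0.
Qed.

Lemma NR_det n (B : 'M[R]_n) : NR B -> 0 < \det B.
Proof.
elim: n B => [|m IH] B HB; first by rewrite det_mx00 ltr01.
have cpos : 0 < cofactor B 0 0.
  by rewrite cofactor_ii; apply: IH; apply: NR_sub => //; exact: lift_inj.
have NRc c : 0 <= c -> NR (B + c *: delta_mx 0 0).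
  move=> c0 x x0; have [i Hi] := HB x x0; exists i.
  rewrite mulmxDr -scalemxAr mxE [X in _ + X]mxE mul_delta mulrDr.
  apply: ltr_wpDr => //; case: (i == 0) /eqP => [->|_]; last by rewrite mulr0 mulr0.
  by rewrite mulrCA mulr_ge0 // -expr2 sqr_ge0.
rewrite ltNge; apply/negP => Hle.
have c0 : 0 <= - \det B / cofactor B 0 0.
  by rewrite divr_ge0 // ?oppr_ge0 // ltW.
move/NR_det0: (NRc _ c0); rewrite det_add_delta -mulrA mulVf ?mulr1 ?subrr ?eqxx //.
by rewrite gt_eqF.
Qed.

Lemma Pinj_delta n (A : 'M[R]_n) j c : Pinj A -> 0 <= c ->
  Pinj (A + c *: delta_mx j j).
Proof.
move=> HA c0 k f finj.
have -> : mxsub f f (A + c *: delta_mx j j) =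
   mxsub f f A + c *: mxsub f f (delta_mx j j).
  by apply/matrixP => a b; rewrite !mxE.
case: (pickP (fun i0 => f i0 == j)) => [i0 /eqP Ei0 | H].
  have -> : mxsub f f (delta_mx j j : 'M[R]_n) = delta_mx i0 i0.
    apply/matrixP => a b; rewrite !mxE -Ei0 !(inj_eq finj) //.
  rewrite det_add_delta cofactor_ii -mxsub_comp.
  apply: ltr_wpDr; last exact: HA.
  by apply: mulr_ge0 => //; apply/ltW/HA/inj_comp => //; exact: lift_inj.
have -> : mxsub f f (delta_mx j j : 'M[R]_n) = 0.
  by apply/matrixP => a b; rewrite !mxE H.
by rewrite scaler0 addr0; apply: HA.
Qed.

Lemma Pinj_diag n (A : 'M[R]_n) (d : 'rV[R]_n) : Pinj A ->
  (forall i, 0 <= d 0 i) -> Pinj (A + diag_mx d).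
Proof.
move=> HA d0; rewrite diag_mx_sum_delta.
elim: (index_enum _) => [|i s IH]; first by rewrite big_nil addr0.
by rewrite big_cons addrA addrAC; apply: Pinj_delta.
Qed.

Lemma Pinj_NR n (A : 'M[R]_n) : Pinj A -> NR A.
Proof.
move=> HA x x0.
case: (pickP (fun i => 0 < x 0 i * (x *m A) 0 i)) => [i Hi | H]; first by exists i.
exfalso.
have Hle i : x 0 i * (x *m A) 0 i <= 0 by rewrite leNgt H.
pose d := \row_i (if x 0 i == 0 then 0 else - (x *m A) 0 i / x 0 i).
have d0 i : 0 <= d 0 i.
  rewrite mxE; case: eqP => // /eqP xi.
  have -> : - (x *m A) 0 i / x 0 i = - (x 0 i * (x *m A) 0 i) / (x 0 i ^+ 2).
    by field.
  by rewrite divr_ge0 ?sqr_ge0 // oppr_ge0.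
pose C := A + diag_mx d.
have HC : Pinj C by apply: Pinj_diag.
have xC i : x 0 i != 0 -> (x *m C) 0 i = 0.
  move=> xi; rewrite mulmxDr mul_mx_diag !mxE (negbTE xi); field => //.
pose S := [set i | x 0 i != 0].
pose f := @enum_val _ (mem S).
have finj : injective f by exact: enum_val_inj.
pose y := \row_j x 0 (f j).
have xy : x = y *m Pm f.
  apply/matrixP => a i; rewrite ord1.
  case: (boolP (i \in S)) => iS.
    by rewrite -(enum_rankK_in iS iS) mulP_in // mxE.
  rewrite mulP_out; first by move: iS; rewrite inE negbK => /eqP.
  move=> j; apply/eqP => E; move: iS; rewrite -E.
  by rewrite enum_valP.
have y0 : y != 0 by apply: contraNneq x0 => y0; rewrite xy y0 mul0mx.
have : \det (mxsub f f C) == 0.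
  apply/det0P; exists y => //.
  apply/matrixP => a j; rewrite ord1 mxsubP !mulmxA -xy mulPtr [RHS]mxE xC //.
  by have := enum_valP j; rewrite inE.
by rewrite gt_eqF // HC.
Qed.

Lemma det_mxsub_inj m k (B : 'M[R]_m) (h : 'I_k -> 'I_m) :
  injective h -> k = m -> \det (mxsub h h B) = \det B.
Proof.
move=> hinj e; subst k.
rewrite -(det_mxsub_perm B (perm hinj)); congr (\det _).
by apply: eq_mxsub => i; rewrite permE.
Qed.

Lemma P_Pinj n (A : 'M[R]_n) : is_Pmatrix A -> Pinj A.
Proof.
move=> HA [|k] f finj; first by rewrite det_mx00 ltr01.
pose S := [set f i | i in [set: 'I_k.+1]].
have Hx0 : f ord0 \in S by apply: imset_f; rewrite inE.
pose h i := enum_rank_in Hx0 (f i).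
have Eh i : enum_val (h i) = f i.
  by rewrite /h enum_rankK_in //; apply: imset_f; rewrite inE.
have hinj : injective h by move=> a b /(congr1 enum_val); rewrite !Eh => /finj.
have cS : k.+1 = #|S| by rewrite card_imset // cardsT card_ord.
have -> : mxsub f f A = mxsub h h (principal_submx A S).
  by apply/matrixP => a b; rewrite !mxE !Eh.
rewrite det_mxsub_inj //; apply: HA.
by apply/set0Pn; exists (f ord0).
Qed.

Lemma sqr_pos (a : R) : a != 0 -> 0 < a * a.
Proof. by move=> a0; rewrite lt0r mulf_neq0 //= -expr2 sqr_ge0. Qed.

Lemma NR_M n (A : 'M[R]_n) : NR A -> NR (block_mx A (A + 1%:M) (A - 1%:M) A).
Proof.
move=> HA x x0.
rewrite -(hsubmxK x) mul_row_block.
set x1 := lsubmx x; set x2 := rsubmx x.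
pose w := x1 + x2.
have E1 : x1 *m A + x2 *m (A - 1%:M) = w *m A - x2.
  by rewrite mulmxBr mulmx1 mulmxDl addrA.
have E2 : x1 *m (A + 1%:M) + x2 *m A = w *m A + x1.
  by rewrite mulmxDr mulmx1 mulmxDl addrAC.
rewrite E1 E2.
have [w0|w0] := eqVneq w 0.
  have ex2 : x2 = - x1 by apply/eqP; rewrite -addr_eq0 addrC; apply/eqP.
  have x10 : x1 != 0.
    apply: contraNneq x0 => e; rewrite -(hsubmxK x) -/x1 -/x2 ex2 e oppr0.
    by rewrite row_mx0.
  have [i xi] := nz_entry x10.
  exists (lshift n i); rewrite !row_mxEl w0 mul0mx sub0r ex2 opprK.
  exact: sqr_pos.
have [i Hi] := HA w w0.
have Esum : w 0 i * (w *m A) 0 i =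
   x1 0 i * (w *m A - x2) 0 i + x2 0 i * (w *m A + x1) 0 i.
  rewrite !mxE; ring.
case: (boolP (0 < x1 0 i * (w *m A - x2) 0 i)) => H1.
  by exists (lshift n i); rewrite !row_mxEl.
exists (rshift n i); rewrite !row_mxEr.
move: Hi H1; rewrite Esum -leNgt.
set a := x1 0 i * _; set b := x2 0 i * _; move=> Hi H1; lra.
Qed.

End S.

Theorem lemma6p7 (R : realFieldType) (n : nat) (A : 'M[R]_n) :
  is_Pmatrix A ->
  is_Pmatrix (block_mx A (A + 1%:M) (A - 1%:M) A).
Proof.
move=> HA S _.
have NRA : NR A by apply: Pinj_NR; apply: P_Pinj.
have -> : principal_submx (block_mx A (A + 1%:M) (A - 1%:M) A) S
    = mxsub enum_val enum_val (block_mx A (A + 1%:M) (A - 1%:M) A).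
  by apply/matrixP => a b; rewrite !mxE.
apply: NR_det; apply: NR_sub; first exact: enum_val_inj.
exact: NR_M.
Qed.
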